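(* On $\mathbb C^2\otimes\mathbb C^2$, let $|\pm\rangle=(|0\rangle\pm|1\rangle)/\sqrt2$, let $\rho_1=\tfrac12(|00\rangle\langle00|+|{+}{+}\rangle\langle{+}{+}|)$, and let $\rho_3=|\psi\rangle\langle\psi|$ with $|\psi\rangle$ the normalization of $\alpha|1\rangle|-\rangle+\beta|-\rangle|1\rangle$, where $\alpha\beta\neq0$. Then $\rho_1$ and $\rho_3$ are orthogonal and $\{\rho_1,\rho_3\}$ is not perfectly distinguishable by LOCC.
   Context: ''Perfectly distinguishable by LOCC'': a finite-round protocol of local measurements by the two parties with broadcast of outcomes identifies the given state with probability 1. States are orthogonal if $\mathrm{tr}(\rho_1\rho_3)=0$. *)

(* Defs.v *)
From HB Require Import structures.
From mathcomp Require Import all_boot all_order all_algebra.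
Set Implicit Arguments. Unset Strict Implicit. Unset Printing Implicit Defensive.
Import Order.TTheory GRing.Theory Num.Theory.
Local Open Scope ring_scope.

Section Qubits.
Variable C : numClosedFieldType.

Definition adj m n (A : 'M[C]_(m, n)) : 'M[C]_(n, m) := (map_mx (fun z => z^*) A)^T.

Definition ket0 : 'cV[C]_2 := \col_(i < 2) (if val i == 0%N then 1 else 0).
Definition ket1 : 'cV[C]_2 := \col_(i < 2) (if val i == 1%N then 1 else 0).
Definition ketp : 'cV[C]_2 := (sqrtC 2)^-1 *: (ket0 + ket1).
Definition ketm : 'cV[C]_2 := (sqrtC 2)^-1 *: (ket0 - ket1).

(* C^2 (x) C^2 = C^4, with |a>|b> at index 2a+b *)
Definition kket (a b : 'cV[C]_2) : 'cV[C]_4 :=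
  \col_(i < 4) (a (inord (i %/ 2)) 0 * b (inord (i %% 2)) 0).
Definition kron (A B : 'M[C]_2) : 'M[C]_4 :=
  \matrix_(i < 4, j < 4)
    (A (inord (i %/ 2)) (inord (j %/ 2)) * B (inord (i %% 2)) (inord (j %% 2))).

Definition ketbra n (v : 'cV[C]_n) : 'M[C]_n := v *m adj v.

Definition orthogonal_states (r1 r2 : 'M[C]_4) : Prop := \tr (r1 *m r2) = 0.

(* Finite-round LOCC protocols: a finite tree; at each node one party
   (Alice = first factor, Bob = second factor) performs a local measurement
   with finitely many outcomes, given by Kraus operators, and broadcasts the
   outcome; at a leaf the parties announce a guess of type I. *)
Inductive protocol (I : Type) :=
| Guess of I
| MeasA (n : nat) of ('I_n -> 'M[C]_2) & ('I_n -> protocol I)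
| MeasB (n : nat) of ('I_n -> 'M[C]_2) & ('I_n -> protocol I).

Fixpoint valid_protocol I (P : protocol I) : Prop :=
  match P with
  | Guess _ => True
  | MeasA n K nx => \sum_(k < n) (adj (K k) *m K k) = 1%:M /\
                    forall k, valid_protocol (nx k)
  | MeasB n K nx => \sum_(k < n) (adj (K k) *m K k) = 1%:M /\
                    forall k, valid_protocol (nx k)
  end.

(* probability that protocol P, started after the accumulated operator Acc
   has acted on the state rho, ends with guess j *)
Fixpoint guess_prob (I : eqType) (P : protocol I) (Acc rho : 'M[C]_4) (j : I) : C :=
  match P with
  | Guess g => if g == j then \tr (Acc *m rho *m adj Acc) else 0
  | MeasA n K nx => \sum_(k < n) guess_prob (nx k) (kron (K k) 1%:M *m Acc) rho j
  | MeasB n K nx => \sum_(k < n) guess_prob (nx k) (kron 1%:M (K k) *m Acc) rho j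
  end.

Definition LOCC_perfectly_distinguishable (I : eqType) (rho : I -> 'M[C]_4) : Prop :=
  exists P : protocol I, valid_protocol P /\
    forall i : I, guess_prob P 1%:M (rho i) i = 1.

End Qubits.

(* Main.v *)
Require Import Defs.
From HB Require Import structures.
From mathcomp Require Import all_boot all_order all_algebra.
Import Order.TTheory GRing.Theory Num.Theory.
Local Open Scope ring_scope.
Set Implicit Arguments. Unset Strict Implicit.
Section K.
Variable C : numClosedFieldType.
Lemma sum2 (F : 'I_2 -> C) : \sum_(i < 2) F i = F (inord 0) + F (inord 1).
Proof.
rewrite !big_ord_recl big_ord0 addr0; congr (F _ + F _); apply/val_inj; rewrite /= ?inordK //.
Qed.
Lemma sum4 (F : 'I_4 -> C) : \sum_(i < 4) F i = F (inord 0) + F (inord 1) + F (inord 2) + F (inord 3).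
Proof.
rewrite !big_ord_recl big_ord0 addr0 !addrA; congr (F _ + F _ + F _ + F _); apply/val_inj; rewrite /= ?inordK //.
Qed.
Definition dm2 := ((erefl : (0 %/ 2 = 0)%N), (erefl : (1 %/ 2 = 0)%N), (erefl : (2 %/ 2 = 1)%N),
  (erefl : (3 %/ 2 = 1)%N), (erefl : (0 %% 2 = 0)%N), (erefl : (1 %% 2 = 1)%N), (erefl : (2 %% 2 = 0)%N), (erefl : (3 %% 2 = 1)%N)).
Lemma ringK (a0 a1 b0 b1 c0 c1 d0 d1 : C) :
  a0 * b0 * (c0 * d0) + a0 * b1 * (c0 * d1) + a1 * b0 * (c1 * d0) + a1 * b1 * (c1 * d1)
  = (a0 * c0 + a1 * c1) * (b0 * d0 + b1 * d1).
Proof. by rewrite mulrDl !mulrDr !addrA; congr (_ + _ + _ + _); exact: mulrACA. Qed.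
Lemma kronM (A B A' B' : 'M[C]_2) : kron A B *m kron A' B' = kron (A *m A') (B *m B').
Proof.
apply/matrixP => i j; rewrite !mxE sum4 !sum2 !mxE !inordK // !dm2.
exact: ringK.
Qed.

Lemma ord2 (i : 'I_2) : i = inord 0 \/ i = inord 1.
Proof.
case: i => [[|[|k]] Hk]; [left|right|by []]; apply/val_inj; by rewrite /= inordK.
Qed.
Lemma ord4 (i : 'I_4) : [\/ i = inord 0, i = inord 1, i = inord 2 | i = inord 3].
Proof.
case: i => [[|[|[|[|k]]]] Hk]; [apply: Or41|apply: Or42|apply: Or43|apply: Or44|by []];
  apply/val_inj; by rewrite /= inordK.
Qed.

Lemma adjM m n p (A : 'M[C]_(m, n)) (B : 'M[C]_(n, p)) : adj (A *m B) = adj B *m adj A.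
Proof.
apply/matrixP => i j; rewrite !mxE rmorph_sum; apply: eq_bigr => k _.
by rewrite !mxE rmorphM mulrC.
Qed.
Lemma adjK m n (A : 'M[C]_(m, n)) : adj (adj A) = A.
Proof. by apply/matrixP => i j; rewrite !mxE conjCK. Qed.
Lemma adjD m n (A B : 'M[C]_(m, n)) : adj (A + B) = adj A + adj B.
Proof. by apply/matrixP => i j; rewrite !mxE rmorphD. Qed.
Lemma adjZc m n a (A : 'M[C]_(m, n)) : adj (a *: A) = a^* *: adj A.
Proof. by apply/matrixP => i j; rewrite !mxE rmorphM. Qed.
Lemma adj_kron (A B : 'M[C]_2) : adj (kron A B) = kron (adj A) (adj B).
Proof. by apply/matrixP => i j; rewrite !mxE rmorphM. Qed.
Lemma adj1c n : adj (1%:M : 'M[C]_n) = 1%:M.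
Proof. apply/matrixP => i j; rewrite !mxE eq_sym. by case: (_ == _); rewrite /= ?rmorph1 ?rmorph0. Qed.

Lemma kron_suml I (r : seq I) (P : pred I) (A : I -> 'M[C]_2) B :
  kron (\sum_(k <- r | P k) A k) B = \sum_(k <- r | P k) kron (A k) B.
Proof. apply/matrixP => i j; rewrite !mxE !summxE big_distrl /=; apply: eq_bigr => k _; by rewrite !mxE. Qed.
Lemma kron_sumr I (r : seq I) (P : pred I) (A : I -> 'M[C]_2) B :
  kron B (\sum_(k <- r | P k) A k) = \sum_(k <- r | P k) kron B (A k).
Proof. apply/matrixP => i j; rewrite !mxE !summxE big_distrr /=; apply: eq_bigr => k _; by rewrite !mxE. Qed.

Lemma kron11 : kron (1%:M : 'M[C]_2) 1%:M = 1%:M.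
Proof.
apply/matrixP => i j.
case: (ord4 i) => ->; case: (ord4 j) => ->; rewrite !mxE !inordK // !dm2 -?val_eqE /= ?inordK //;
  by rewrite ?mulr1 ?mulr0 ?mul0r.
Qed.
Lemma kronZl a (A B : 'M[C]_2) : kron (a *: A) B = a *: kron A B.
Proof. by apply/matrixP => i j; rewrite !mxE mulrA. Qed.
Lemma kronZr a (A B : 'M[C]_2) : kron A (a *: B) = a *: kron A B.
Proof. by apply/matrixP => i j; rewrite !mxE mulrCA. Qed.
Lemma scalar_mx_Z n (a : C) : (a%:M : 'M[C]_n) = a *: 1%:M.
Proof. by rewrite scale_scalar_mx mulr1. Qed.
Definition fm n (x : 'cV[C]_n) (X : 'M[C]_n) (y : 'cV[C]_n) := (adj x *m X *m y) 0 0.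

Lemma tr_rank1 (A : 'M[C]_4) x y : \tr (A *m (x *m adj y) *m adj A) = fm y (adj A *m A) x.
Proof.
rewrite /fm mulmxA -(mulmxA (A *m x)) mxtrace_mulC trace_mx11 !mulmxA.
by [].
Qed.

Lemma nrm_ge0 n (w : 'cV[C]_n) : 0 <= (adj w *m w) 0 0.
Proof. rewrite mxE; apply: sumr_ge0 => k _; by rewrite !mxE mulrC mul_conjC_ge0. Qed.
Lemma nrm_eq0 n (w : 'cV[C]_n) : (adj w *m w) 0 0 = 0 -> w = 0.
Proof.
rewrite mxE => H; apply/matrixP => i j; rewrite (ord1 j) mxE.
have G : forall k, predT k -> 0 <= adj w 0 k * w k 0.
  by move=> k _; rewrite !mxE mulrC mul_conjC_ge0.
have := psumr_eq0P G H (isT : predT i).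
rewrite !mxE mulrC => E; apply/eqP; rewrite -mul_conjC_eq0; exact/eqP.
Qed.

Lemma fm_adjA (A : 'M[C]_4) x y : fm y (adj A *m A) x = (adj (A *m y) *m (A *m x)) 0 0.
Proof. by rewrite /fm adjM !mulmxA. Qed.

Lemma gp_lin (I : eqType) (P : protocol C I) Acc a M N j :
  guess_prob P Acc (a *: M + N) j = a * guess_prob P Acc M j + guess_prob P Acc N j.
Proof.
elim: P Acc => [g|n K nx IH|n K nx IH] Acc /=.
- case: (g == j); last by rewrite mulr0 addr0.
  by rewrite mulmxDr mulmxDl -scalemxAr -scalemxAl mxtraceD mxtraceZ.
- by rewrite mulr_sumr -big_split /=; apply: eq_bigr => k _; rewrite IH.
- by rewrite mulr_sumr -big_split /=; apply: eq_bigr => k _; rewrite IH.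
Qed.

Lemma gp_ge0 (I : eqType) (P : protocol C I) Acc (x : 'cV[C]_4) j : 0 <= guess_prob P Acc (x *m adj x) j.
Proof.
elim: P Acc => [g|n K nx IH|n K nx IH] Acc /=.
- case: (g == j) => //; rewrite tr_rank1 fm_adjA; exact: nrm_ge0.
- by apply: sumr_ge0 => k _.
- by apply: sumr_ge0 => k _.
Qed.

Lemma gp_ann (I : eqType) (P : protocol C I) Acc (x y : 'cV[C]_4) j :
  guess_prob P Acc (x *m adj x) j = 0 ->
  guess_prob P Acc (x *m adj y) j = 0 /\ guess_prob P Acc (y *m adj x) j = 0.
Proof.
elim: P Acc => [g|n K nx IH|n K nx IH] Acc /=.
- case: (g == j) => //; rewrite !tr_rank1 !fm_adjA => /nrm_eq0 H.
  have A0 : adj (0 : 'cV[C]_4) = 0 by apply/matrixP => i k; rewrite !mxE rmorph0.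
  by rewrite H mulmx0 A0 mul0mx !mxE.
- move=> H; have H' k : guess_prob (nx k) (kron (K k) 1%:M *m Acc) (x *m adj x) j = 0.
    by apply: (psumr_eq0P _ H) => // i _; exact: gp_ge0.
  by split; apply: big1 => k _; have [] := IH k _ (H' k).
- move=> H; have H' k : guess_prob (nx k) (kron 1%:M (K k) *m Acc) (x *m adj x) j = 0.
    by apply: (psumr_eq0P _ H) => // i _; exact: gp_ge0.
  by split; apply: big1 => k _; have [] := IH k _ (H' k).
Qed.

Lemma tr_sum n I (r : seq I) (P : pred I) (F : I -> 'M[C]_n) : \tr (\sum_(i <- r | P i) F i) = \sum_(i <- r | P i) \tr (F i).
Proof. exact: raddf_sum. Qed.

Lemma gp_compl (P : protocol C bool) Acc M : valid_protocol P ->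
  guess_prob P Acc M true + guess_prob P Acc M false = \tr (Acc *m M *m adj Acc).
Proof.
elim: P Acc => [g|n K nx IH|n K nx IH] Acc /=.
- by case: g => _ /=; rewrite ?addr0 ?add0r.
- case=> HK Hv; rewrite -big_split /=.
  under eq_bigr => k _ do rewrite IH // adjM -!mulmxA mxtrace_mulC -!mulmxA.
  rewrite -tr_sum -mulmx_sumr -mulmx_sumr.
  under eq_bigr => k _ do rewrite adj_kron adj1c kronM mul1mx.
  by rewrite -mulmx_sumr -kron_suml HK kron11 mulmx1 !mulmxA.
- case=> HK Hv; rewrite -big_split /=.
  under eq_bigr => k _ do rewrite IH // adjM -!mulmxA mxtrace_mulC -!mulmxA.
  rewrite -tr_sum -mulmx_sumr -mulmx_sumr.
  under eq_bigr => k _ do rewrite adj_kron adj1c kronM mul1mx.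
  by rewrite -mulmx_sumr -kron_sumr HK kron11 mulmx1 !mulmxA.
Qed.
Lemma fmZ n (x y : 'cV[C]_n) c X : fm x (c *: X) y = c * fm x X y.
Proof. by rewrite /fm -scalemxAr -scalemxAl mxE. Qed.

Lemma AA (a b : 'M[C]_2) : adj (kron a b) *m kron a b = kron (adj a *m a) (adj b *m b).
Proof. by rewrite adj_kron kronM. Qed.

Lemma orth (P : protocol C bool) Acc (x y : 'cV[C]_4) : valid_protocol P ->
  guess_prob P Acc (x *m adj x) false = 0 -> guess_prob P Acc (y *m adj y) true = 0 ->
  fm y (adj Acc *m Acc) x = 0 /\ fm x (adj Acc *m Acc) y = 0.
Proof.
move=> Hv Hx Hy; have [Hx1 Hx2] := gp_ann y Hx; have [Hy1 Hy2] := gp_ann x Hy.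
by rewrite -!tr_rank1 -!(gp_compl _ _ Hv) ?Hx1 ?Hx2 ?Hy1 ?Hy2 addr0.
Qed.

End K.
Section K2.
Variable C : numClosedFieldType.
Variables (v1 v2 ps : 'cV[C]_4).
Hypothesis HA : forall M : 'M[C]_2, fm ps (kron M 1%:M) v1 = 0 -> fm v1 (kron M 1%:M) ps = 0 ->
  fm ps (kron M 1%:M) v2 = 0 -> fm v2 (kron M 1%:M) ps = 0 -> M = (M 0 0)%:M.
Hypothesis HB : forall M : 'M[C]_2, fm ps (kron 1%:M M) v1 = 0 -> fm v1 (kron 1%:M M) ps = 0 ->
  fm ps (kron 1%:M M) v2 = 0 -> fm v2 (kron 1%:M M) ps = 0 -> M = (M 0 0)%:M.
Hypothesis Hv1 : (adj v1 *m v1) 0 0 != 0.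
Hypothesis Hps : (adj ps *m ps) 0 0 != 0.

Lemma sum0P n (F : 'I_n -> C) : (forall k, 0 <= F k) -> \sum_(k < n) F k = 0 -> forall k, F k = 0.
Proof. by move=> H S k; apply: (psumr_eq0P _ S). Qed.

Lemma scal0 n : (0%:M : 'M[C]_n) = 0.
Proof. by apply/matrixP => i j; rewrite !mxE mul0rn. Qed.

Lemma scal_eq0 n (l : C) : (l%:M : 'M[C]_n.+1) = 0 -> l = 0.
Proof. by move/matrixP => /(_ 0 0); rewrite !mxE eqxx mulr1n. Qed.

Lemma core (P : protocol C bool) : valid_protocol P -> forall a b lam mu,
  adj a *m a = lam%:M -> adj b *m b = mu%:M ->
  guess_prob P (kron a b) (v1 *m adj v1) false = 0 ->
  guess_prob P (kron a b) (v2 *m adj v2) false = 0 ->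
  guess_prob P (kron a b) (ps *m adj ps) true = 0 -> lam * mu = 0.
Proof.
have kls (l m : C) : kron (l%:M : 'M[C]_2) m%:M = (l * m) *: 1%:M.
  by rewrite (scalar_mx_Z _ l) (scalar_mx_Z _ m) kronZl kronZr kron11 scalerA mulrC.
elim: P => [g|n K nx IH|n K nx IH] Hv a b lam mu Ha Hb /=.
- rewrite !tr_rank1 AA Ha Hb kls !fmZ.
  clear Hv; case: g => /=; [move=> _ _ H | move=> H _ _]; move/eqP: H;
  rewrite mulf_eq0 => /orP [/eqP // | /eqP H];
  move: H; rewrite /fm mulmx1 => H; [move: Hps | move: Hv1]; by rewrite H eqxx.
- move: Hv => [HK Hv] H1 H2 H3.
  have [//|Hlm] := eqVneq (lam * mu) 0.
  move: (Hlm); rewrite mulf_eq0 negb_or => /andP [Hl Hm].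
  have Ek k : kron (K k) 1%:M *m kron a b = kron (K k *m a) b by rewrite kronM mul1mx.
  have G1 := sum0P (fun k => gp_ge0 _ _ _ _) H1.
  have G2 := sum0P (fun k => gp_ge0 _ _ _ _) H2.
  have G3 := sum0P (fun k => gp_ge0 _ _ _ _) H3.
  have Hk k : adj (K k *m a) *m (K k *m a) = ((adj (K k *m a) *m (K k *m a)) 0 0)%:M.
    have [o1 o2] := orth (Hv k) (G1 k) (G3 k).
    have [o3 o4] := orth (Hv k) (G2 k) (G3 k).
    move: o1 o2 o3 o4; rewrite Ek AA Hb (scalar_mx_Z _ mu) kronZr !fmZ.
    move=> /eqP; rewrite mulf_eq0 (negPf Hm) /= => /eqP o1.
    move=> /eqP; rewrite mulf_eq0 (negPf Hm) /= => /eqP o2.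
    move=> /eqP; rewrite mulf_eq0 (negPf Hm) /= => /eqP o3.
    move=> /eqP; rewrite mulf_eq0 (negPf Hm) /= => /eqP o4.
    exact: HA.
  have Z k : adj (K k *m a) *m (K k *m a) = 0.
    have := IH k (Hv k) (K k *m a) b _ mu (Hk k) Hb.
    rewrite -Ek => /(_ (G1 k) (G2 k) (G3 k)) /eqP; rewrite mulf_eq0 (negPf Hm) orbF => /eqP Z.
    by rewrite (Hk k) Z scal0.
  have : lam%:M = 0 :> 'M[C]_2.
    have S : \sum_(k < n) adj (K k *m a) *m (K k *m a) = 0 by apply: big1 => k _; exact: Z k.
    rewrite -Ha -S.
    under [RHS]eq_bigr => k _ do rewrite adjM -mulmxA (mulmxA (adj (K k))).
    by rewrite -mulmx_sumr -mulmx_suml HK mul1mx.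
  by move/scal_eq0 => L; move: Hl; rewrite L eqxx.
- move: Hv => [HK Hv] H1 H2 H3.
  have [//|Hlm] := eqVneq (lam * mu) 0.
  move: (Hlm); rewrite mulf_eq0 negb_or => /andP [Hl Hm].
  have Ek k : kron 1%:M (K k) *m kron a b = kron a (K k *m b) by rewrite kronM mul1mx.
  have G1 := sum0P (fun k => gp_ge0 _ _ _ _) H1.
  have G2 := sum0P (fun k => gp_ge0 _ _ _ _) H2.
  have G3 := sum0P (fun k => gp_ge0 _ _ _ _) H3.
  have Hk k : adj (K k *m b) *m (K k *m b) = ((adj (K k *m b) *m (K k *m b)) 0 0)%:M.
    have [o1 o2] := orth (Hv k) (G1 k) (G3 k).
    have [o3 o4] := orth (Hv k) (G2 k) (G3 k).
    move: o1 o2 o3 o4; rewrite Ek AA Ha (scalar_mx_Z _ lam) kronZl !fmZ.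
    move=> /eqP; rewrite mulf_eq0 (negPf Hl) /= => /eqP o1.
    move=> /eqP; rewrite mulf_eq0 (negPf Hl) /= => /eqP o2.
    move=> /eqP; rewrite mulf_eq0 (negPf Hl) /= => /eqP o3.
    move=> /eqP; rewrite mulf_eq0 (negPf Hl) /= => /eqP o4.
    exact: HB.
  have Z k : adj (K k *m b) *m (K k *m b) = 0.
    have := IH k (Hv k) a (K k *m b) lam _ Ha (Hk k).
    rewrite -Ek => /(_ (G1 k) (G2 k) (G3 k)) /eqP; rewrite mulf_eq0 (negPf Hl) /= => /eqP Z.
    by rewrite (Hk k) Z scal0.
  have : mu%:M = 0 :> 'M[C]_2.
    have S : \sum_(k < n) adj (K k *m b) *m (K k *m b) = 0 by apply: big1 => k _; exact: Z k.
    rewrite -Hb -S.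
    under [RHS]eq_bigr => k _ do rewrite adjM -mulmxA (mulmxA (adj (K k))).
    by rewrite -mulmx_sumr -mulmx_suml HK mul1mx.
  by move/scal_eq0 => L; move: Hm; rewrite L eqxx.
Qed.
End K2.
Section K3.
Variable C : numClosedFieldType.
Local Notation r := ((sqrtC (2 : C))^-1).

Lemma r_ge0 : 0 <= r.
Proof. by rewrite invr_ge0 sqrtC_ge0 ler0n. Qed.
Lemma r_conj : r^* = r.
Proof. exact: geC0_conj r_ge0. Qed.
Lemma r_sq : r * r = 2^-1.
Proof. by rewrite -expr2 exprVn sqrtCK. Qed.
Lemma r_neq0 : r != 0.
Proof. by rewrite invr_eq0 sqrtC_eq0 pnatr_eq0. Qed.

Lemma inord_eq2 (a b : nat) : (a < 2)%N -> (b < 2)%N -> ((inord a : 'I_2) == inord b) = (a == b).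
Proof. by move=> Ha Hb; rewrite -val_eqE /= !inordK. Qed.

Lemma vinord n k : (k < n.+1)%N -> val (@inord n k) = k.
Proof. exact: inordK. Qed.

Lemma fmE (x y : 'cV[C]_4) X : fm x X y = \sum_(j < 4) \sum_(i < 4) (x i 0)^* * X i j * y j 0.
Proof.
rewrite /fm !mxE; apply: eq_bigr => j _; rewrite !mxE big_distrl /=; apply: eq_bigr => i _.
by rewrite !mxE.
Qed.

Lemma kketE (a b : 'cV[C]_2) k : (k < 4)%N -> kket a b (inord k) 0 = a (inord (k %/ 2)) 0 * b (inord (k %% 2)) 0.
Proof. by move=> Hk; rewrite !mxE inordK. Qed.


End K3.
Section K4.
Variable C : numClosedFieldType.
Variables (al be : C).
Local Notation r := ((sqrtC (2 : C))^-1).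
Let v1 := kket (ket0 C) (ket0 C).
Let v2 := kket (ketp C) (ketp C).
Let ps := al *: kket (ket1 C) (ketm C) + be *: kket (ketm C) (ket1 C).

Lemma v1e : [/\ v1 (inord 0) 0 = 1, v1 (inord 1) 0 = 0, v1 (inord 2) 0 = 0 & v1 (inord 3) 0 = 0].
Proof. by rewrite /v1 !kketE // !dm2 !mxE !vinord //= ?mulr0 ?mul0r ?mulr1. Qed.
Lemma v2e : [/\ v2 (inord 0) 0 = 2^-1, v2 (inord 1) 0 = 2^-1, v2 (inord 2) 0 = 2^-1 & v2 (inord 3) 0 = 2^-1].
Proof. by rewrite /v2 !kketE // !dm2 !mxE !vinord //= ?add0r ?addr0 ?mulr1 r_sq. Qed.
Lemma pse : [/\ ps (inord 0) 0 = 0, ps (inord 1) 0 = be * r, ps (inord 2) 0 = al * r & ps (inord 3) 0 = - (al * r) - be * r].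
Proof.
rewrite /ps !mxE !vinord //=.
by rewrite ?subr0 ?sub0r ?mul0r ?mulr0 ?mul1r ?mulr1 ?add0r ?addr0 ?mulrN1 ?mulrN.
Qed.
End K4.
Section K5.
Variable C : numClosedFieldType.
Variables (al be : C).
Local Notation r := ((sqrtC (2 : C))^-1).
Let v1 := kket (ket0 C) (ket0 C).
Let v2 := kket (ketp C) (ketp C).
Let ps := al *: kket (ket1 C) (ketm C) + be *: kket (ketm C) (ket1 C).

Lemma kronE (A B : 'M[C]_2) i j : (i < 4)%N -> (j < 4)%N ->
  kron A B (inord i) (inord j) = A (inord (i %/ 2)) (inord (j %/ 2)) * B (inord (i %% 2)) (inord (j %% 2)).
Proof. by move=> Hi Hj; rewrite !mxE !inordK. Qed.

Lemma alg3 (a b x y : C) : b != 0 -> b * x / 2 + a * y / 2 + (- a - b) * y / 2 = 0 -> x = y.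
Proof.
move=> Hb; rewrite !mulrBl !mulNr !addrA addrK => /eqP; rewrite subr_eq0 => /eqP.
move=> H; apply: (mulfI Hb); apply: (mulIf (_ : 2^-1 != 0 :> C)) => //.
by rewrite invr_eq0 pnatr_eq0.
Qed.

Hypothesis Ha : al / sqrtC 2 != 0.
Hypothesis Hb : (be / sqrtC 2)^* != 0.
Hypothesis Hb' : be / sqrtC 2 != 0.
Hypothesis Ha' : (al / sqrtC 2)^* != 0.

Lemma HAc (M : 'M[C]_2) : fm ps (kron M 1%:M) v1 = 0 -> fm v1 (kron M 1%:M) ps = 0 ->
  fm ps (kron M 1%:M) v2 = 0 -> fm v2 (kron M 1%:M) ps = 0 -> M = (M 0 0)%:M.
Proof.
have [a0 a1 a2 a3] := v1e C; have [b0 b1 b2 b3] := v2e C; have [c0 c1 c2 c3] := pse al be.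
rewrite !fmE !sum4 -/v1 -/v2 -/ps a0 a1 a2 a3 b0 b1 b2 b3 c0 c1 c2 c3 !kronE // !dm2 !mxE !inord_eq2 //=.
rewrite ?rmorph0 ?rmorph1 ?mulr1n ?mulr0n ?mulr0 ?mul0r ?mulr1 ?mul1r ?addr0 ?add0r.
have i0 : (0 : 'I_2) = inord 0 by apply/val_inj; rewrite /= inordK.
move=> /eqP; rewrite mulf_eq0 conjC_eq0 (negPf Ha) /= => /eqP E10.
move=> /eqP; rewrite mulf_eq0 (negPf Ha) orbF => /eqP E01.
rewrite E10 E01 ?mulr0 ?mul0r ?add0r ?addr0 rmorphB rmorphN => E _.
have E' := alg3 Hb E.
apply/matrixP => i j; rewrite !mxE i0.
by case: (ord2 i) => ->; case: (ord2 j) => ->; rewrite ?inord_eq2 //= ?mulr1n ?mulr0n ?E10 ?E01 ?E'.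
Qed.
Lemma HBc (M : 'M[C]_2) : fm ps (kron 1%:M M) v1 = 0 -> fm v1 (kron 1%:M M) ps = 0 ->
  fm ps (kron 1%:M M) v2 = 0 -> fm v2 (kron 1%:M M) ps = 0 -> M = (M 0 0)%:M.
Proof.
have [a0 a1 a2 a3] := v1e C; have [b0 b1 b2 b3] := v2e C; have [c0 c1 c2 c3] := pse al be.
rewrite !fmE !sum4 -/v1 -/v2 -/ps a0 a1 a2 a3 b0 b1 b2 b3 c0 c1 c2 c3 !kronE // !dm2 !mxE !inord_eq2 //=.
rewrite ?rmorph0 ?rmorph1 ?mulr1n ?mulr0n ?mulr0 ?mul0r ?mulr1 ?mul1r ?addr0 ?add0r.
rewrite /= ?mulr0n ?mulr0 ?mul0r ?addr0 ?add0r.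
have i0 : (0 : 'I_2) = inord 0 by apply/val_inj; rewrite /= inordK.
move=> /eqP; rewrite mulf_eq0 (negPf Hb) /= => /eqP E10.
move=> /eqP; rewrite mulf_eq0 (negPf Hb') orbF => /eqP E01.
rewrite E10 E01 ?mulr0 ?mul0r ?add0r ?addr0 rmorphB rmorphN => E _.
move: E; rewrite [X in X + _ = 0]addrC [(- _ - _)]addrC => E.
have E' := alg3 Ha' E.
apply/matrixP => i j; rewrite !mxE i0.
by case: (ord2 i) => ->; case: (ord2 j) => ->; rewrite ?inord_eq2 //= ?mulr1n ?mulr0n ?E10 ?E01 ?E'.
Qed.

End K5.
Lemma addsubC (C : numClosedFieldType) (x y : C) : x + y + (- y - x) = 0.
Proof. by rewrite -opprD (addrC y) subrr. Qed.

Section M.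
Variable C : numClosedFieldType.

Lemma gp_scale (I : eqType) (P : protocol C I) Acc a M j :
  guess_prob P Acc (a *: M) j = a * guess_prob P Acc M j.
Proof.
elim: P Acc => [g|n K nx IH|n K nx IH] Acc /=.
- case: (g == j); last by rewrite mulr0.
  by rewrite -scalemxAr -scalemxAl mxtraceZ.
- by rewrite mulr_sumr; apply: eq_bigr => k _; rewrite IH.
- by rewrite mulr_sumr; apply: eq_bigr => k _; rewrite IH.
Qed.

Lemma gp_add (I : eqType) (P : protocol C I) Acc M N j :
  guess_prob P Acc (M + N) j = guess_prob P Acc M j + guess_prob P Acc N j.
Proof. by rewrite -(scale1r M) gp_lin mul1r scale1r. Qed.

Lemma tr_ketbra (v : 'cV[C]_4) : \tr (v *m adj v) = (adj v *m v) 0 0.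
Proof. by rewrite mxtrace_mulC trace_mx11. Qed.

Lemma half_add : 2^-1 + 2^-1 = 1 :> C.
Proof. by rewrite -mulr2n -(mulr_natr (2^-1 : C) 2) mulVf // pnatr_eq0. Qed.

Lemma half_conj : (2^-1 : C)^* = 2^-1.
Proof. by apply: geC0_conj; rewrite invr_ge0 ler0n. Qed.

Lemma adjE m n (A : 'M[C]_(m, n)) i j : adj A i j = (A j i)^*.
Proof. by rewrite !mxE. Qed.

Lemma nrm_v1 : (adj (kket (ket0 C) (ket0 C)) *m kket (ket0 C) (ket0 C)) 0 0 = 1.
Proof.
have [a0 a1 a2 a3] := v1e C.
rewrite mxE sum4 !adjE a0 a1 a2 a3 rmorph0 rmorph1.
by rewrite mulr0 !addr0 mulr1.
Qed.

Lemma nrm_v2 : (adj (kket (ketp C) (ketp C)) *m kket (ketp C) (ketp C)) 0 0 = 1.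
Proof.
have [a0 a1 a2 a3] := v2e C.
rewrite mxE sum4 !adjE a0 a1 a2 a3 half_conj.
by rewrite -addrA -!mulrDr !half_add mulrDr mulr1 half_add.
Qed.

Lemma orth_v1 (al be : C) : adj (kket (ket0 C) (ket0 C)) *m (al *: kket (ket1 C) (ketm C) + be *: kket (ketm C) (ket1 C)) = 0.
Proof.
have [a0 a1 a2 a3] := v1e C; have [c0 c1 c2 c3] := pse al be.
apply/matrixP => i j; rewrite !ord1 [RHS]mxE mxE sum4 !adjE a0 a1 a2 a3 c0 c1 c2 c3 rmorph0 rmorph1.
by rewrite !mul0r mulr0 !addr0.
Qed.

Lemma orth_v2 (al be : C) : adj (kket (ketp C) (ketp C)) *m (al *: kket (ket1 C) (ketm C) + be *: kket (ketm C) (ket1 C)) = 0.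
Proof.
have [a0 a1 a2 a3] := v2e C; have [c0 c1 c2 c3] := pse al be.
apply/matrixP => i j; rewrite !ord1 [RHS]mxE mxE sum4 !adjE a0 a1 a2 a3 c0 c1 c2 c3 half_conj.
by rewrite -!mulrDr add0r addsubC mulr0.
Qed.
End M.

Unset Implicit Arguments.
Theorem mainTheorem8 (C : numClosedFieldType) (alpha beta : C) :
  alpha * beta != 0 ->
  let rho1 : 'M[C]_4 :=
    2^-1 *: (ketbra (kket (ket0 C) (ket0 C)) + ketbra (kket (ketp C) (ketp C))) in
  let psi : 'cV[C]_4 :=
    alpha *: kket (ket1 C) (ketm C) + beta *: kket (ketm C) (ket1 C) in
  let rho3 : 'M[C]_4 :=
    ketbra ((sqrtC ((adj psi *m psi) 0 0))^-1 *: psi) in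
  orthogonal_states rho1 rho3 /\
  ~ LOCC_perfectly_distinguishable (fun b : bool => if b then rho1 else rho3).
Proof.
move=> Hab rho1 psi rho3.
have [Hal Hbe] : alpha != 0 /\ beta != 0.
  by move: Hab; rewrite mulf_eq0 negb_or => /andP.
set v1 := kket (ket0 C) (ket0 C); set v2 := kket (ketp C) (ketp C).
set np := (adj psi *m psi) 0 0.
set c := (sqrtC np)^-1.
have E3 : rho3 = (c * c^*) *: (psi *m adj psi).
  by rewrite /rho3 /ketbra adjZc -scalemxAl -scalemxAr scalerA.
have Hr := r_neq0 C.
have Ha : alpha / sqrtC 2 != 0 by rewrite mulf_neq0.
have Hb' : beta / sqrtC 2 != 0 by rewrite mulf_neq0.
have Ha' : (alpha / sqrtC 2)^* != 0 by rewrite conjC_eq0.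
have Hb : (beta / sqrtC 2)^* != 0 by rewrite conjC_eq0.
have Hps : np != 0.
  apply/negP => /eqP /nrm_eq0 H0.
  have [_ c1 _ _] := pse alpha beta; move: c1; rewrite -/psi H0 mxE => /esym/eqP.
  by rewrite (negPf Hb').
have Hv1 : (adj v1 *m v1) 0 0 != 0 by rewrite /v1 nrm_v1 oner_eq0.
split.
  rewrite /orthogonal_states E3 /rho1 /ketbra -scalemxAl -scalemxAr mulmxDl.
  rewrite -!mulmxA !(mulmxA (adj _)) /v1 /v2 /psi orth_v1 orth_v2 !mul0mx !mulmx0 addr0 !scaler0.
  exact: raddf0.
case=> P [Hv H]; have H1 := H true; have H3 := H false; rewrite /= in H1 H3.
have C1 := gp_compl 1%:M rho1 Hv; rewrite adj1c mul1mx mulmx1 in C1.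
have Htr1 : \tr rho1 = 1.
  by rewrite /rho1 /ketbra mxtraceZ mxtraceD !tr_ketbra nrm_v1 nrm_v2 mulrDr mulr1 half_add.
have F1 : guess_prob P 1%:M rho1 false = 0.
  by apply: (addrI 1); rewrite -{1}H1 C1 Htr1 addr0.
move: F1; rewrite /rho1 /ketbra gp_scale gp_add => /eqP; rewrite mulf_eq0 invr_eq0 pnatr_eq0 /=.
rewrite paddr_eq0 ?gp_ge0 // => /andP [/eqP G1 /eqP G2].
have C3 := gp_compl 1%:M rho3 Hv; rewrite adj1c mul1mx mulmx1 in C3.
have Hc : c^* = c by apply: geC0_conj; rewrite invr_ge0 sqrtC_ge0 nrm_ge0.
have Hcc : c * c^* * np = 1.
  by rewrite Hc -expr2 /c exprVn sqrtCK mulVf.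
move: C3 H3; rewrite E3 !gp_scale mxtraceZ tr_ketbra -/np Hcc => C3 H3.
have G3 : guess_prob P 1%:M (psi *m adj psi) true = 0.
  have : c * c^* * guess_prob P 1%:M (psi *m adj psi) true = 0.
    by apply: (addIr 1); rewrite -{2}H3 C3 add0r.
  move=> /eqP; rewrite mulf_eq0 => /orP [/eqP Z|/eqP //].
  by move: H3; rewrite Z mul0r => /esym/eqP; rewrite oner_eq0.
have HA := HAc Ha Hb; have HB := HBc Hb Hb' Ha'.
have := core HA HB Hv1 Hps Hv (a := 1%:M) (b := 1%:M) (lam := 1) (mu := 1).
rewrite adj1c mulmx1 kron11 => /(_ erefl erefl G1 G2 G3) /eqP.
by rewrite mulr1 oner_eq0.
Qed.
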